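(* Let $D$ be a digraph and let $S$ be the set of all sources and sinks of $D$. Then $\operatorname{bw}(u(D))-|S|\le\operatorname{dbw}(D)\le\operatorname{bw}(u(D))$.
   Context: All digraphs are finite and loopless. A source has no incoming edges, a sink no outgoing edges. $u(D)$ is the undirected multigraph with one edge $xy$ per directed edge $\vec{xy}$. Branch-width of an undirected multigraph $G$: minimum over pairs $(T,\tau)$ ($T$ a tree of maximum degree at most three, $\tau$ a bijection from leaves of $T$ onto $E(G)$) of the maximum over edges $t$ of $T$ of the number of vertices incident both with an edge of $\tau(Y)$ and an edge of $E(G)\setminus\tau(Y)$, $Y$ being the leaves on one side of $T-t$ (width 0 if $T$ has no edges). Directed branch-width $\operatorname{dbw}(D)$: same, with $\beta$ a bijection from leaves onto $E(D)$ and the order of $t$ equal to $|S^V_{\beta(Y)}\cup S^V_{E(D)\setminus\beta(Y)}|$, where $S^V_X=\{y: \exists x,z,\ \vec{xy}\in E(D)\setminus X,\ \vec{yz}\in X\}$. *)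

(* Defs.v *)
From mathcomp Require Import all_boot.
From Stdlib Require Import ClassicalEpsilon.

Set Implicit Arguments.
Unset Strict Implicit.
Unset Printing Implicit Defensive.

(* The empty graph counts as a tree (needed only for edgeless D). *)
Definition is_tree (T : finType) (t : rel T) : Prop :=
  [/\ symmetric t, irreflexive t, (forall x y : T, connect t x y)
    & (forall c : seq T, 3 <= size c -> ~~ (cycle t c && uniq c))].

Definition deg (T : finType) (t : rel T) (x : T) : nat := #|[set y | t x y]|.

Definition cut_rel (T : finType) (t : rel T) (a b : T) : rel T :=
  fun x y => t x y && ~~ (((x == a) && (y == b)) || ((x == b) && (y == a))).

(* There is a branch decomposition (T, beta) of the edge set E in which every
   edge ab of T has order f(X) <= k, X being the set of edges of E mapped to
   leaves on a's side of T - ab. beta : E -> leaves(T) is a bijection (its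
   inverse is the paper's tau). Leaves = vertices of degree <= 1. *)
Definition bdec_width_le (E : finType) (f : {set E} -> nat) (k : nat) : Prop :=
  exists (T : finType) (t : rel T) (beta : E -> T),
    [/\ is_tree t, (forall x, deg t x <= 3),
        injective beta /\ (forall e, deg t (beta e) <= 1),
        (forall x, deg t x <= 1 -> exists e, beta e = x)
      & (forall a b, t a b ->
           f [set e | connect (cut_rel t a b) a (beta e)] <= k)].

Definition least_nat (P : nat -> Prop) : nat :=
  epsilon (inhabits 0) (fun k => P k /\ forall j, P j -> k <= j).

(* undirected multigraph with vertices V, edges E, ends : E -> V * V *)
Definition ug_order (V E : finType) (ends : E -> V * V) (X : {set E}) : nat :=
  let inc e v := (v == (ends e).1) || (v == (ends e).2) in
  #|[set v : V | [exists e in X, inc e v] && [exists e in ~: X, inc e v]]|.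

Definition bw (V E : finType) (ends : E -> V * V) : nat :=
  least_nat (bdec_width_le (ug_order ends)).

(* digraph with vertices V, arcs E, arc e goes from tail e to head e *)
Definition SV (V E : finType) (tail head : E -> V) (X : {set E}) : {set V} :=
  [set y | [exists e in ~: X, head e == y] && [exists e in X, tail e == y]].

Definition dg_order (V E : finType) (tail head : E -> V) (X : {set E}) : nat :=
  #|SV tail head X :|: SV tail head (~: X)|.

Definition dbw (V E : finType) (tail head : E -> V) : nat :=
  least_nat (bdec_width_le (dg_order tail head)).

(* the underlying undirected multigraph u(D): one edge per arc *)
Definition u_ends (V E : finType) (tail head : E -> V) (e : E) : V * V :=
  (tail e, head e).

Definition sources_sinks (V E : finType) (tail head : E -> V) : {set V} :=
  [set v | [forall e, head e != v] || [forall e, tail e != v]].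

(* Main.v *)
Require Import Defs.
From Stdlib Require Import ClassicalEpsilon Classical FunctionalExtensionality PropExtensionality.
From mathcomp Require Import all_boot.

Set Implicit Arguments.
Unset Strict Implicit.
Unset Printing Implicit Defensive.

Lemma ex_min (P : nat -> Prop) : (exists k, P k) ->
  exists k, P k /\ forall j, P j -> k <= j.
Proof.
move=> [k Pk]; apply: NNPP => H.
have H2 : forall n j, j <= n -> ~ P j.
  elim=> [|n IH] j.
    rewrite leqn0 => /eqP -> P0; apply: H; exists 0; split=> //.
  rewrite leq_eqVlt => /orP [/eqP -> Pn|]; last by rewrite ltnS; apply: IH.
  apply: H; exists n.+1; split=> // j' Pj'; rewrite leqNgt; apply/negP => lt.
  by apply: (IH j') => //; rewrite -ltnS.
exact: (H2 k k (leqnn k) Pk).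
Qed.

Lemma least_nat_spec (P : nat -> Prop) : (exists k, P k) ->
  P (least_nat P) /\ forall j, P j -> least_nat P <= j.
Proof.
move=> /ex_min H; rewrite /least_nat.
exact: (epsilon_spec (inhabits 0) (fun k => P k /\ forall j, P j -> k <= j) H).
Qed.

Lemma bdec_mono (E : finType) (f g : {set E} -> nat) c k :
  (forall X, g X <= f X + c) -> bdec_width_le f k -> bdec_width_le g (k + c).
Proof.
move=> fg [T [t [beta [H1 H2 H3 H4 H5]]]].
exists T, t, beta; split=> // a b tab.
by apply: leq_trans (fg _) _; rewrite leq_add2r; apply: H5.
Qed.

Section Orders.
Variables (V E : finType) (tail head : E -> V).

Lemma ord_le1 X : dg_order tail head X <= ug_order (u_ends tail head) X + 0.
Proof.
rewrite addn0 /dg_order /ug_order; apply: subset_leq_card; apply/subsetP => v.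
rewrite !inE /= => /orP [] /andP [/existsP [e /andP [He /eqP Hv]] /existsP [e' /andP [He' /eqP Hv']]].
  apply/andP; split; apply/existsP.
    by exists e'; rewrite He' /= Hv' eqxx ?orbT.
  by exists e; rewrite He /= Hv eqxx ?orbT.
apply/andP; split; apply/existsP.
  by exists e; move: He; rewrite !inE negbK => ->; rewrite /= Hv eqxx ?orbT.
by exists e'; rewrite He' /= Hv' eqxx ?orbT.
Qed.

Lemma ord_le2 X : ug_order (u_ends tail head) X <=
   dg_order tail head X + #|sources_sinks tail head|.
Proof.
rewrite /dg_order /ug_order.
apply: leq_trans (leq_card_setU _ _); apply: subset_leq_card; apply/subsetP => v.
rewrite inE /= => /andP [/existsP [e1 /andP [He1 I1]] /existsP [e2 /andP [He2 I2]]].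
case: (boolP (v \in sources_sinks tail head)) => HS; first by apply/setUP; right.
apply/setUP; left; move: HS.
rewrite inE negb_or !negb_forall => /andP [/existsP [a] /negbNE /eqP Ha /existsP [b] /negbNE /eqP Hb].

have S1 : forall x y, head x = v -> tail y = v -> x \notin X -> y \in X ->
   v \in SV tail head X.
  move=> x y hx ty nx iy; rewrite inE; apply/andP; split; apply/existsP.
    by exists x; rewrite inE nx hx eqxx.
  by exists y; rewrite iy ty eqxx.
have S2 : forall x y, head x = v -> tail y = v -> x \in X -> y \notin X ->
   v \in SV tail head (~: X).
  move=> x y hx ty nx iy; rewrite inE; apply/andP; split; apply/existsP.
    by exists x; rewrite !inE negbK nx hx eqxx.
  by exists y; rewrite inE iy ty eqxx.
rewrite in_setU.
case: (boolP (a \in X)) => Xa; case: (boolP (b \in X)) => Xb.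
  move: He2 I2; rewrite inE => He2 /orP [/eqP/esym|/eqP/esym] E2.
    by rewrite (S2 a e2 Ha E2 Xa He2) orbT.
  by rewrite (S1 e2 b E2 Hb He2 Xb).
  by rewrite (S2 a b Ha Hb Xa Xb) orbT.
  by rewrite (S1 a b Ha Hb Xa Xb).
move: I1 => /orP [/eqP/esym|/eqP/esym] E1.
  by rewrite (S1 a e1 Ha E1 Xa He1).
by rewrite (S2 e1 b E1 Hb He1 Xb) orbT.
Qed.
End Orders.

Theorem mainTheorem10 (V E : finType) (tail head : E -> V)
  (loopless : forall e, tail e != head e)
  (simple : injective (fun e => (tail e, head e))) :
  bw (u_ends tail head) - #|sources_sinks tail head| <= dbw tail head
  <= bw (u_ends tail head).
Proof.
set s := #|sources_sinks tail head|.
case: (classic (exists k, bdec_width_le (ug_order (u_ends tail head)) k)) => Hex.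
  have [Pb Mb] := least_nat_spec Hex.
  have Pd : bdec_width_le (dg_order tail head) (bw (u_ends tail head) + 0).
    by apply: bdec_mono Pb => X; apply: ord_le1.
  have [Pd' Md] := least_nat_spec (ex_intro _ _ Pd).
  apply/andP; split.
    rewrite leq_subLR addnC.
    apply: Mb; exact: bdec_mono (@ord_le2 _ _ tail head) Pd'.
  by have := Md _ Pd; rewrite addn0.
have Hd : ~ exists k, bdec_width_le (dg_order tail head) k.
  move=> [k Hk]; apply: Hex; exists (k + s).
  exact: bdec_mono (@ord_le2 _ _ tail head) Hk.
have Eq : bdec_width_le (dg_order tail head) = bdec_width_le (ug_order (u_ends tail head)).
  apply: functional_extensionality => k; apply: propositional_extensionality.
  by split=> H; [case: Hd | case: Hex]; exists k.
rewrite /dbw Eq -/(bw _) leqnn andbT; exact: leq_subr.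
Qed.
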